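(* Let $n\geqslant 18$, $k=\lceil\log_2 n\rceil$, $G=(V,E)$ the complete graph on $V=\{1,\ldots,n\}$, and for $i\in V$ let $\mathbf i\in\{0,1\}^k$ be the binary digits of $i-1$ (i.e. $i-1=\sum_{t=1}^k i_t2^{t-1}$). Let $b(\mathbf x)=\sum_{ij\in E}(-1)^{\langle\mathbf i,\mathbf j\rangle}x_ix_j$. Then for $\mathbf x=(1/2,\ldots,1/2)$, \[\operatorname{mcgap}[b](\mathbf x)\geqslant\frac{\sqrt n}{3}\operatorname{chgap}[b](\mathbf x).\]
   Context: $\langle\mathbf i,\mathbf j\rangle=\sum_t i_tj_t$. $B=\{(\mathbf x,z)\in[0,1]^n\times\mathbb R:z=b(\mathbf x)\}$. The McCormick polytopes are $P=\{(\mathbf x,\mathbf y)\in[0,1]^n\times[0,1]^{|E|}: y_{ij}\le x_i,\ y_{ij}\le x_j,\ y_{ij}\ge x_i+x_j-1\ \forall ij\in E\}$ and $Q=\{(\mathbf x,z)\in[0,1]^n\times\mathbb R:\exists\mathbf y\in[0,1]^{|E|}\text{ with }(\mathbf x,\mathbf y)\in P,\ z=\sum_{ij\in E}a_{ij}y_{ij}\}$ where $a_{ij}$ are the coefficients of $b$. $\operatorname{cav}[b](\mathbf x)=\max\{z:(\mathbf x,z)\in\operatorname{conv}(B)\}$, $\operatorname{vex}[b](\mathbf x)=\min\{z:(\mathbf x,z)\in\operatorname{conv}(B)\}$, $\operatorname{mcu}[b](\mathbf x)=\max\{z:(\mathbf x,z)\in Q\}$, $\operatorname{mcl}[b](\mathbf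 x)=\min\{z:(\mathbf x,z)\in Q\}$, $\operatorname{chgap}[b]=\operatorname{cav}[b]-\operatorname{vex}[b]$, $\operatorname{mcgap}[b]=\operatorname{mcu}[b]-\operatorname{mcl}[b]$. *)

(* Defs.v *)
From Stdlib Require Import Reals Lra Lia.
Open Scope R_scope.

Fixpoint fsum (N : nat) (f : nat -> R) : R :=
  match N with O => 0 | S N' => fsum N' f + f N' end.

(* Vertices are 0-based: vertex i in {1..n} of the paper is i-1 here, and
   bit t (0-based) of i-1 is the paper's i_{t+1}.  <i,j> over k bits: *)
Fixpoint inner (k i j : nat) : nat :=
  match k with
  | O => O
  | S t => (inner t i j + (if andb (Nat.testbit i t) (Nat.testbit j t) then 1 else 0))%nat
  end.

Definition kbits (n : nat) : nat := Nat.log2_up n.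

Definition coef (n i j : nat) : R := (-1) ^ (inner (kbits n) i j).

Definition bfun (n : nat) (x : nat -> R) : R :=
  fsum n (fun j => fsum j (fun i => coef n i j * x i * x j)).

Definition in_cube (n : nat) (x : nat -> R) : Prop :=
  forall i, (i < n)%nat -> 0 <= x i <= 1.

Definition in_convB (n : nat) (x : nat -> R) (z : R) : Prop :=
  exists (N : nat) (lam : nat -> R) (p : nat -> nat -> R),
    (forall m, (m < N)%nat -> 0 <= lam m) /\
    fsum N lam = 1 /\
    (forall m, (m < N)%nat -> in_cube n (p m)) /\
    (forall i, (i < n)%nat -> x i = fsum N (fun m => lam m * p m i)) /\
    z = fsum N (fun m => lam m * bfun n (p m)).

(* (x,y) in P, the McCormick polytope (y_ij stored as y i j, i < j < n). *)
Definition in_P (n : nat) (x : nat -> R) (y : nat -> nat -> R) : Prop :=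
  in_cube n x /\
  forall i j, (i < j)%nat -> (j < n)%nat ->
    0 <= y i j <= 1 /\ y i j <= x i /\ y i j <= x j /\ y i j >= x i + x j - 1.

Definition in_Q (n : nat) (x : nat -> R) (z : R) : Prop :=
  in_cube n x /\
  exists y : nat -> nat -> R, in_P n x y /\
    z = fsum n (fun j => fsum j (fun i => coef n i j * y i j)).

Definition half_pt : nat -> R := fun _ => / 2.

(* mcgap[b](x) >= c * chgap[b](x), where chgap = max{z1-z2 : (x,z1),(x,z2) in conv B}
   and mcgap = max{w1-w2 : (x,w1),(x,w2) in Q} (both maxima are attained),
   stated without choosing the maximisers: *)
Definition mcgap_ge_c_chgap (n : nat) (x : nat -> R) (c : R) : Prop :=
  forall z1 z2, in_convB n x z1 -> in_convB n x z2 ->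
    exists w1 w2, in_Q n x w1 /\ in_Q n x w2 /\ w1 - w2 >= c * (z1 - z2).

(* Main.v *)
Require Import Defs.
From Stdlib Require Import Reals Lra Lia Arith.
Open Scope R_scope.

Lemma fsum_ext N f g : (forall i, (i < N)%nat -> f i = g i) -> fsum N f = fsum N g.
Proof. induction N; simpl; intros H; auto. rewrite IHN by (intros; apply H; lia). rewrite H by lia. auto. Qed.

Lemma fsum_plus N f g : fsum N (fun i => f i + g i) = fsum N f + fsum N g.
Proof. induction N; simpl; [lra| rewrite IHN; lra]. Qed.

Lemma fsum_minus N f g : fsum N (fun i => f i - g i) = fsum N f - fsum N g.
Proof. induction N; simpl; [lra| rewrite IHN; lra]. Qed.

Lemma fsum_scal N c f : fsum N (fun i => c * f i) = c * fsum N f.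
Proof. induction N; simpl; [lra| rewrite IHN; lra]. Qed.

Lemma fsum_zero N f : (forall i, (i < N)%nat -> f i = 0) -> fsum N f = 0.
Proof. intros H. rewrite (fsum_ext N f (fun _ => 0)) by auto. induction N; simpl; [lra| rewrite IHN; [lra|intros; apply H; lia]]. Qed.

Lemma fsum_swap N M (f : nat -> nat -> R) :
  fsum N (fun a => fsum M (fun b => f a b)) = fsum M (fun b => fsum N (fun a => f a b)).
Proof. induction N; simpl.
- symmetry; apply fsum_zero; auto.
- rewrite IHN, <- fsum_plus. auto. Qed.

Lemma fsum_le N f g : (forall i, (i < N)%nat -> f i <= g i) -> fsum N f <= fsum N g.
Proof. induction N; simpl; intros H; [lra|]. assert (H1 := H N (Nat.lt_succ_diag_r N)).
 assert (fsum N f <= fsum N g) by (apply IHN; intros; apply H; lia). lra. Qed.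

Lemma fsum_add N M f : fsum (N + M) f = fsum N f + fsum M (fun t => f (N + t)%nat).
Proof. induction M; simpl. rewrite Nat.add_0_r; lra. rewrite Nat.add_succ_r; simpl. rewrite IHM; lra. Qed.

Lemma fsum_delta N i c : (i < N)%nat -> fsum N (fun j => if Nat.eqb i j then c else 0) = c.
Proof. induction N; intros H; [lia|simpl]. destruct (Nat.eqb_spec i N).
 - subst. rewrite fsum_zero. lra. intros j Hj. destruct (Nat.eqb_spec N j); [lia|auto].
 - rewrite IHN by lia. lra. Qed.

Fixpoint lowEq (k i j : nat) : bool :=
  match k with O => true | S t => andb (lowEq t i j) (Bool.eqb (Nat.testbit i t) (Nat.testbit j t)) end.

Definition h (k i j : nat) : R := (-1) ^ (inner k i j).

Lemma inner_ext k i t t' : (forall s, (s < k)%nat -> Nat.testbit t s = Nat.testbit t' s) ->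
  inner k i t = inner k i t'.
Proof. induction k; simpl; intros H; auto. rewrite IHk by (intros; apply H; lia). rewrite H by lia. auto. Qed.

Lemma testbit_shift k t s : (s < k)%nat -> Nat.testbit (2^k + t) s = Nat.testbit t s.
Proof. intros Hs. rewrite <- (Nat.mod_pow2_bits_low (2^k+t) k s Hs), <- (Nat.mod_pow2_bits_low t k s Hs).
 f_equal. replace (2^k + t)%nat with (t + 1 * 2^k)%nat by lia. apply Nat.Div0.mod_add. Qed.

Lemma testbit_top k t : (t < 2^k)%nat -> Nat.testbit (2^k + t) k = true.
Proof. intros H. apply Nat.testbit_true. replace (2^k + t)%nat with (t + 1 * 2^k)%nat by lia.
 rewrite Nat.div_add. rewrite Nat.div_small by auto. reflexivity. apply Nat.pow_nonzero; lia. Qed.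

Lemma testbit_low k t : (t < 2^k)%nat -> Nat.testbit t k = false.
Proof. intros H. rewrite <- (Nat.mod_small t (2^k) H). apply Nat.mod_pow2_bits_high. lia. Qed.

Lemma h_low k i t : (t < 2^k)%nat -> h (S k) i t = h k i t.
Proof. intros H. unfold h. simpl inner. rewrite (testbit_low k t H). rewrite Bool.andb_false_r. rewrite Nat.add_0_r. reflexivity. Qed.

Definition sg (b : bool) : R := if b then -1 else 1.

Lemma h_high k i t : (t < 2^k)%nat -> h (S k) i (2^k + t) = h k i t * sg (Nat.testbit i k).
Proof. intros H. unfold h. simpl inner. rewrite testbit_top by auto. rewrite Bool.andb_true_r.
 rewrite pow_add. rewrite (inner_ext k i (2^k + t) t) by (intros; apply testbit_shift; auto).
 destruct (Nat.testbit i k); simpl; lra. Qed.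

Lemma orth k i j : fsum (2^k) (fun t => h k i t * h k j t) = if lowEq k i j then INR (2^k) else 0.
Proof. induction k.
- simpl. unfold h; simpl. lra.
- replace (2 ^ S k)%nat with (2^k + 2^k)%nat by (simpl; lia).
  rewrite fsum_add.
  rewrite (fsum_ext (2^k) (fun t => h (S k) i t * h (S k) j t) (fun t => h k i t * h k j t)) by (intros; cbv beta; rewrite !h_low; auto).
  rewrite (fsum_ext (2^k) (fun t => h (S k) i (2^k+t) * h (S k) j (2^k+t)) (fun t => (sg (Nat.testbit i k) * sg (Nat.testbit j k)) * (h k i t * h k j t)))
    by (intros; cbv beta; rewrite !h_high; auto; lra).
  rewrite fsum_scal, IHk. simpl lowEq. rewrite plus_INR.
  destruct (lowEq k i j); simpl; [|lra].
  destruct (Nat.testbit i k), (Nat.testbit j k); simpl; lra.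
Qed.

Lemma lowEq_refl k i : lowEq k i i = true.
Proof. induction k; simpl; auto. rewrite IHk. destruct (Nat.testbit i k); auto. Qed.

Lemma lowEq_spec k i j : lowEq k i j = true -> forall s, (s < k)%nat -> Nat.testbit i s = Nat.testbit j s.
Proof. induction k; simpl; intros H s Hs; [lia|]. apply andb_prop in H as [H1 H2].
 destruct (Nat.eq_dec s k). subst. apply Bool.eqb_prop; auto. apply IHk; auto; lia. Qed.

Lemma lowEq_eq k i j : lowEq k i j = true -> (i < 2^k)%nat -> (j < 2^k)%nat -> i = j.
Proof. intros H Hi Hj. apply Nat.bits_inj_iff. intros s. destruct (Nat.lt_ge_cases s k).
 apply (lowEq_spec k); auto.
 rewrite <- (Nat.mod_small i _ Hi), <- (Nat.mod_small j _ Hj), !Nat.mod_pow2_bits_high; auto. Qed.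

Lemma orth2 k i j : (i < 2^k)%nat -> (j < 2^k)%nat ->
  fsum (2^k) (fun t => h k i t * h k j t) = if Nat.eqb i j then INR (2^k) else 0.
Proof. intros. rewrite orth. destruct (Nat.eqb_spec i j). subst; rewrite lowEq_refl; auto.
 destruct (lowEq k i j) eqn:E; auto. exfalso; match goal with Hn : i <> j |- _ => apply Hn end; apply (lowEq_eq k); auto. Qed.

Lemma fsum_mulr N f c : fsum N f * c = fsum N (fun i => f i * c).
Proof. rewrite Rmult_comm, <- fsum_scal. apply fsum_ext; intros; lra. Qed.

Lemma sq_sum N a : (fsum N a)^2 = fsum N (fun i => fsum N (fun j => a i * a j)).
Proof. replace ((fsum N a)^2) with (fsum N a * fsum N a) by ring. rewrite fsum_mulr. apply fsum_ext. intros. rewrite <- fsum_scal. auto. Qed.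

Lemma pm1 m : (-1)^m = 1 \/ (-1)^m = -1.
Proof. induction m; simpl; [left; lra|]. destruct IHm as [-> | ->]; [right|left]; lra. Qed.

Lemma h_sq k i j : h k i j * h k i j = 1.
Proof. unfold h. destruct (pm1 (inner k i j)) as [-> | ->]; lra. Qed.

Lemma inner_sym k i j : inner k i j = inner k j i.
Proof. induction k; simpl; auto. rewrite IHk, Bool.andb_comm. auto. Qed.

Lemma parseval k n v : (n <= 2^k)%nat ->
  fsum (2^k) (fun t => (fsum n (fun i => h k i t * v i))^2) = INR (2^k) * fsum n (fun i => v i ^ 2).
Proof. intros Hn.
 rewrite (fsum_ext _ _ (fun t => fsum n (fun i => fsum n (fun j => (v i * v j) * (h k i t * h k j t))))).
 2:{ intros. rewrite sq_sum. apply fsum_ext; intros; apply fsum_ext; intros; lra. }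
 rewrite fsum_swap.
 rewrite (fsum_ext n _ (fun i => INR (2^k) * v i ^ 2)). apply fsum_scal.
 intros i Hi. rewrite fsum_swap.
 rewrite (fsum_ext n _ (fun j => if Nat.eqb i j then INR (2^k) * v i ^ 2 else 0)).
 apply fsum_delta; auto.
 intros j Hj. rewrite fsum_scal, orth2 by lia. destruct (Nat.eqb_spec i j); [subst; lra|lra].
Qed.

Lemma fsum_nonneg N f : (forall i, (i < N)%nat -> 0 <= f i) -> 0 <= fsum N f.
Proof. intros H. rewrite <- (fsum_zero N (fun _ => 0)) by auto. apply fsum_le; auto. Qed.

Lemma fsum_mono_range n K f : (n <= K)%nat -> (forall i, 0 <= f i) -> fsum n f <= fsum K f.
Proof. intros H Hf. replace K with (n + (K - n))%nat by lia. rewrite fsum_add.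
 assert (0 <= fsum (K - n) (fun t => f (n + t)%nat)) by (apply fsum_nonneg; auto). lra. Qed.

Lemma full_bound k n v : (n <= 2^k)%nat ->
  let s := sqrt (INR (2^k)) in
  let F := fsum n (fun j => fsum n (fun i => h k i j * v i * v j)) in
  let Q := fsum n (fun i => v i ^ 2) in
  - (s * Q) <= F <= s * Q.
Proof. intros Hn s F Q.
 set (w := fun j => fsum n (fun i => h k i j * v i)).
 assert (HF : F = fsum n (fun j => v j * w j)).
 { unfold F, w. apply fsum_ext. intros. cbv beta. rewrite <- fsum_scal. apply fsum_ext; intros; lra. }
 assert (HK : 0 < INR (2^k)). { apply lt_0_INR. apply Nat.neq_0_lt_0, Nat.pow_nonzero; lia. }
 assert (Hs : 0 < s) by (apply sqrt_lt_R0; auto).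
 assert (Hss : s * s = INR (2^k)) by (apply sqrt_sqrt; lra).
 assert (HW : fsum n (fun j => w j ^ 2) <= INR (2^k) * Q).
 { unfold Q. rewrite <- parseval by auto. apply fsum_mono_range; auto. intros; apply pow2_ge_0. }
 assert (U : 2 * s * F <= fsum n (fun j => INR (2^k) * v j ^ 2 + w j ^ 2)).
 { rewrite HF, <- fsum_scal. apply fsum_le. intros j _. rewrite <- Hss.
   pose proof (pow2_ge_0 (s * v j - w j)). nra. }
 assert (L : - fsum n (fun j => INR (2^k) * v j ^ 2 + w j ^ 2) <= 2 * s * F).
 { rewrite HF, <- fsum_scal. replace (- fsum n (fun j => INR (2^k) * v j ^ 2 + w j ^ 2)) with ((-1) * fsum n (fun j => INR (2^k) * v j ^ 2 + w j ^ 2)) by ring.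
   rewrite <- fsum_scal. apply fsum_le. intros j _. rewrite <- Hss.
   pose proof (pow2_ge_0 (s * v j + w j)). nra. }
 rewrite fsum_plus, fsum_scal in U, L. fold Q in U, L.
 split; apply (Rmult_le_reg_l (2 * s)); nra.
Qed.

Lemma tri N f : (forall i j, f i j = f j i) ->
  fsum N (fun j => fsum N (fun i => f i j)) = 2 * fsum N (fun j => fsum j (fun i => f i j)) + fsum N (fun i => f i i).
Proof. intros Hs. induction N; simpl; [lra|].
 rewrite fsum_plus, IHN. rewrite (fsum_ext N (f N) (fun j => f j N)) by auto. lra. Qed.

Lemma fsum_const N c : fsum N (fun _ => c) = INR N * c.
Proof. induction N; simpl fsum; [simpl; lra|]. rewrite IHN, S_INR. lra. Qed.

Lemma fsum_id N : fsum N (fun j => INR j) = INR N * (INR N - 1) / 2.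
Proof. induction N; simpl fsum; [simpl; lra|]. rewrite IHN, S_INR. lra. Qed.

Lemma K_bounds n : (2 <= n)%nat -> (n <= 2^(kbits n))%nat /\ (2^(kbits n) <= 2 * n)%nat.
Proof. intros H. unfold kbits. destruct (Nat.log2_up_spec n) as [H1 H2]; [lia|].
 pose proof (Nat.log2_up_pos n ltac:(lia)). split; auto.
 destruct (Nat.log2_up n) as [|k]; [lia|]. simpl in *. lia. Qed.

Definition Mb n := (sqrt (INR (2^(kbits n))) + 1) * INR n / 8.

Lemma bfun_bound n v : (2 <= n)%nat -> (forall i, (i < n)%nat -> v i ^ 2 <= /4) ->
  - Mb n <= bfun n v <= Mb n.
Proof. intros Hn Hv. destruct (K_bounds n Hn) as [HK1 _].
 set (k := kbits n).
 pose proof (full_bound k n v HK1) as HF. cbv zeta in HF.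
 set (s := sqrt (INR (2^k))) in *.
 set (Q := fsum n (fun i => v i ^ 2)) in *.
 assert (Hs : 0 <= s) by apply sqrt_pos.
 rewrite (tri n (fun i j => h k i j * v i * v j)) in HF.
 2:{ intros. unfold h. rewrite inner_sym. ring. }
 assert (HD : - Q <= fsum n (fun i => h k i i * v i * v i) <= Q).
 { unfold Q. split.
   - replace (- fsum n (fun i => v i ^ 2)) with ((-1) * fsum n (fun i => v i ^ 2)) by ring.
     rewrite <- fsum_scal. apply fsum_le. intros i _. unfold h. destruct (pm1 (inner k i i)) as [-> | ->]; nra.
   - apply fsum_le. intros i _. unfold h. destruct (pm1 (inner k i i)) as [-> | ->]; nra. }
 assert (HQ : Q <= INR n / 4).
 { unfold Q. apply Rle_trans with (fsum n (fun _ => /4)); [apply fsum_le; auto | rewrite fsum_const; lra]. }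
 assert (HQ0 : 0 <= Q) by (apply fsum_nonneg; intros; apply pow2_ge_0).
 change (bfun n v) with (fsum n (fun j => fsum j (fun i => h k i j * v i * v j))).
 unfold Mb. fold k. fold s. assert (s * Q <= s * (INR n / 4)) by (apply Rmult_le_compat_l; auto).  lra. Qed.

Definition Lin n (x : nat -> R) := fsum n (fun j => fsum j (fun i => coef n i j * ((x i - /2) + (x j - /2)) / 2)).

Lemma decomp n x : bfun n x = bfun n half_pt + Lin n x + bfun n (fun i => x i - /2).
Proof. unfold bfun, Lin. rewrite <- !fsum_plus. apply fsum_ext. intros j _.
 rewrite <- !fsum_plus. apply fsum_ext. intros i _. unfold half_pt. field. Qed.

Lemma convB_bound n z : (2 <= n)%nat -> in_convB n half_pt z ->
  bfun n half_pt - Mb n <= z <= bfun n half_pt + Mb n.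
Proof. intros Hn (N & lam & p & Hl & Hs & Hc & Hx & Hz). subst z.
 rewrite (fsum_ext N _ (fun m => lam m * bfun n half_pt + lam m * Lin n (p m) + lam m * bfun n (fun i => p m i - /2)))
  by (intros; rewrite decomp; ring).
 rewrite !fsum_plus.
 assert (E1 : fsum N (fun m => lam m * bfun n half_pt) = bfun n half_pt).
 { rewrite <- fsum_mulr, Hs. ring. }
 assert (E2 : fsum N (fun m => lam m * Lin n (p m)) = 0).
 { unfold Lin.
   rewrite (fsum_ext N _ (fun m => fsum n (fun j => fsum j (fun i => lam m * (coef n i j * (p m i - / 2 + (p m j - / 2)) / 2))))).
   2:{ intros. rewrite <- fsum_scal. apply fsum_ext. intros. rewrite <- fsum_scal. auto. }
   rewrite fsum_swap. apply fsum_zero. intros j Hj. rewrite fsum_swap. apply fsum_zero. intros i Hi.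
   rewrite (fsum_ext N _ (fun m => (coef n i j / 2) * (lam m * p m i) + (coef n i j / 2) * (lam m * p m j) - (coef n i j / 2) * lam m))
     by (intros; field).
   rewrite fsum_minus, fsum_plus, !fsum_scal, Hs, <- !Hx by lia. unfold half_pt. field. }
 assert (E3 : - Mb n <= fsum N (fun m => lam m * bfun n (fun i => p m i - /2)) <= Mb n).
 { split.
   - replace (- Mb n) with (fsum N (fun m => lam m * (- Mb n))) by (rewrite <- fsum_mulr, Hs; ring).
     apply fsum_le. intros m Hm. apply Rmult_le_compat_l; auto. apply bfun_bound; auto.
     intros i Hi. destruct (Hc m Hm i Hi). nra.
   - apply Rle_trans with (fsum N (fun m => lam m * Mb n)); [|right; rewrite <- fsum_mulr, Hs; ring].
     apply fsum_le. intros m Hm. apply Rmult_le_compat_l; auto. apply bfun_bound; auto.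
     intros i Hi. destruct (Hc m Hm i Hi). nra. }
 lra.
Qed.

Lemma coef_pm n i j : coef n i j = 1 \/ coef n i j = -1.
Proof. apply pm1. Qed.

Lemma Q_mk n s : s = 1 \/ s = -1 -> in_Q n half_pt (fsum n (fun j => fsum j (fun i => coef n i j * ((1 + s * coef n i j) / 4)))).
Proof. intros Hs0. split; [intros i _; unfold half_pt; lra|].
 exists (fun i j => (1 + s * coef n i j) / 4). split; [|reflexivity].
 split; [intros i _; unfold half_pt; lra|].
 intros i j _ _; unfold half_pt; destruct (coef_pm n i j) as [-> | ->]; destruct Hs0 as [-> | ->]; lra.
Qed.

Theorem mainTheorem7 (n : nat) (hn : (18 <= n)%nat) :
  mcgap_ge_c_chgap n half_pt (sqrt (INR n) / 3).
Proof.
 intros z1 z2 H1 H2.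
 assert (Hn : (2 <= n)%nat) by lia.
 pose proof (convB_bound n z1 Hn H1). pose proof (convB_bound n z2 Hn H2).
 exists (fsum n (fun j => fsum j (fun i => coef n i j * ((1 + 1 * coef n i j) / 4)))).
 exists (fsum n (fun j => fsum j (fun i => coef n i j * ((1 + (-1) * coef n i j) / 4)))).
 split; [apply Q_mk; lra|].
 split; [apply Q_mk; lra|].
 rewrite <- fsum_minus.
 rewrite (fsum_ext n _ (fun j => INR j * /2)).
 2:{ intros j _. rewrite <- fsum_minus, <- fsum_const. apply fsum_ext. intros i _.
     destruct (coef_pm n i j) as [-> | ->]; lra. }
 rewrite <- fsum_mulr, fsum_id.
 destruct (K_bounds n Hn) as [_ HK2].
 apply le_INR in HK2. rewrite mult_INR in HK2. simpl (INR 2) in HK2.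
 apply le_INR in hn. simpl (INR 18) in hn.
 unfold Mb in *.
 set (K := INR (2 ^ kbits n)) in *.
 assert (HK0 : 0 <= K) by apply pos_INR.
 set (s := sqrt K) in *. set (r := sqrt (INR n)).
 assert (Hs : s * s = K) by (apply sqrt_sqrt; auto). assert (s0 : 0 <= s) by apply sqrt_pos.
 assert (Hr : r * r = INR n) by (apply sqrt_sqrt; lra). assert (r0 : 0 <= r) by apply sqrt_pos.
 assert (r4 : 4 <= r) by nra.
 assert (Hrs : r * (s + 1) <= 3 * (INR n - 1)).
 { pose proof (pow2_ge_0 (r - s / 2)). nra. }
 assert (Hz : z1 - z2 <= (s + 1) * INR n / 4) by lra.
 assert (r / 3 * (z1 - z2) <= r / 3 * ((s + 1) * INR n / 4)) by (apply Rmult_le_compat_l; lra).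
 assert (0 <= INR n) by lra.
 assert (r / 3 * ((s + 1) * INR n / 4) <= INR n * (INR n - 1) / 2 * / 2) by nra.
 lra.
Qed.
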